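(* There exists an I$^2$-GNN (a choice of $K$, $T$, $M_t$, $U_t$) such that for every graph $G=(V,E)$, every $i\in V$, every $j\in N(i)$ and every $k\in V_i$, $h^{(T)}_{i,j,k}$ equals the number of $4$-paths of the form $(i\to j\to\cdots\to k)$, i.e. the number of node sequences $i=v_1,\,v_2=j,\,v_3,\,v_4,\,v_5=k$ of pairwise distinct nodes with $(v_s,v_{s+1})\in E$ for $s=1,\dots,4$.
   Context: Graphs are finite, simple, undirected, $G=(V,E)$, possibly carrying node attributes $x_v$ and edge attributes $e_{u,v}$ (a fixed constant when absent); $N(v)$ is the neighbour set of $v$. I$^2$-GNN message passing: specified by an integer $K\ge1$, $T$, and arbitrary functions $M_t$ (values in some $\mathbb R^{d_t}$), $U_t$. For each root $i\in V$, $(V_i,E_i)$ is the subgraph of $G$ induced by nodes at shortest-path distance at most $K$ from $i$, and $N_i(k)=\{l\in V_i:(k,l)\in E_i\}$. For each $j\in N(i)$ and $k\in V_i$: $h^{(0)}_{i,j,k}=x_k\oplus\mathbb 1_{k=i}\oplus\mathbb 1_{k=j}$ ($\oplus$ = concatenation), and $h^{(t+1)}_{i,j,k}=U_t\big(h^{(t)}_{i,j,k},\sum_{l\in N_i(k)}M_t(h^{(t)}_{i,j,k},h^{(t)}_{i,j,l},e_{k,l})\big)$. *)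

(* Defs.v *)
From HB Require Import structures.
From mathcomp Require Import all_boot all_order all_algebra.
From mathcomp Require Import reals.
Set Implicit Arguments. Unset Strict Implicit. Unset Printing Implicit Defensive.
Import Order.TTheory GRing.Theory Num.Theory.
Local Open Scope ring_scope.

Definition simple_graph (V : finType) (adj : rel V) : Prop :=
  symmetric adj /\ irreflexive adj.

Definition khop (V : finType) (adj : rel V) (K : nat) (i : V) : {set V} :=
  iter K (fun S : {set V} => S :|: [set l | [exists k in S, adj k l]]) [set i].

(* Dimension of layer t: layer 0 has dimension dx + 1 + 1 (node attribute
   concatenated with the two indicator bits); later layers have dimension D t'. *)
Definition layer_dim (dx : nat) (D : nat -> nat) (t : nat) : nat :=
  match t with 0 => (dx + (1 + 1))%N | t'.+1 => D t' end.

(* The sum ranges over N_i(k) = { l in V_i | (k,l) in E }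
   (only used for k in V_i, where E_i is the induced subgraph). *)
Fixpoint i2gnn_h (R : ringType) (V : finType) (adj : rel V)
  (dx de : nat) (x : V -> 'rV[R]_dx) (e : V -> V -> 'rV[R]_de)
  (K : nat) (D m : nat -> nat)
  (M : forall t, 'rV[R]_(layer_dim dx D t) -> 'rV[R]_(layer_dim dx D t) ->
                 'rV[R]_de -> 'rV[R]_(m t))
  (U : forall t, 'rV[R]_(layer_dim dx D t) -> 'rV[R]_(m t) ->
                 'rV[R]_(layer_dim dx D t.+1))
  (t : nat) (i j k : V) {struct t} : 'rV[R]_(layer_dim dx D t) :=
  match t return 'rV[R]_(layer_dim dx D t) with
  | 0 => row_mx (x k) (row_mx (const_mx (k == i)%:R) (const_mx (k == j)%:R))
  | t'.+1 =>
      U t' (i2gnn_h adj x e K M U t' i j k)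
        (\sum_(l in khop adj K i | adj k l)
            M t' (i2gnn_h adj x e K M U t' i j k)
                 (i2gnn_h adj x e K M U t' i j l) (e k l))
  end.

Definition count_4paths (V : finType) (adj : rel V) (i j k : V) : nat :=
  #|[pred p : V * V | uniq [:: i; j; p.1; p.2; k]
       && adj i j && adj j p.1 && adj p.1 p.2 && adj p.2 k]|.

(* Main.v *)
Require Import Defs.
From HB Require Import structures.
From mathcomp Require Import all_boot all_order all_algebra.
From mathcomp Require Import reals.
From mathcomp Require Import zify.
Import Order.TTheory GRing.Theory Num.Theory.
Local Open Scope ring_scope.

Section Helpers.
Variable R : nzRingType.

Definition get {n} (v : 'rV[R]_n) (p : nat) : R := \sum_(q < n | val q == p) v 0 q.
Definition mk n (f : nat -> R) : 'rV[R]_n := \row_(q < n) f q.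

Lemma get_mk n f p : (p < n)%N -> get (mk n f) p = f p.
Proof.
move=> H; rewrite /get (big_pred1 (Ordinal H)) ?mxE //.
Qed.

Lemma get_sum n (I : Type) (r : seq I) (P : pred I) (F : I -> 'rV[R]_n) p :
  get (\sum_(l <- r | P l) F l) p = \sum_(l <- r | P l) get (F l) p.
Proof. by rewrite /get; under eq_bigr do rewrite summxE; exact: exchange_big. Qed.

Lemma get_row_mxr n1 n2 (a : 'rV[R]_n1) (b : 'rV[R]_n2) p : (n1 <= p)%N ->
  get (row_mx a b) p = get b (p - n1).
Proof.
move=> Hp; rewrite /get big_split_ord /= big1 ?add0r.
  apply: eq_big => q /=; last by move=> _; rewrite row_mxEr.
  by apply/eqP/eqP => [<-|->]; [rewrite addKn | rewrite subnKC].
move=> q /eqP Hq; exfalso; have := ltn_ord q; rewrite Hq /=; lia.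
Qed.

Lemma get_row_mxl n1 n2 (a : 'rV[R]_n1) (b : 'rV[R]_n2) p : (p < n1)%N ->
  get (row_mx a b) p = get a p.
Proof.
move=> Hp; rewrite /get big_split_ord /= [X in _ + X]big1 ?addr0.
  by apply: eq_big => q //= _; rewrite row_mxEl.
move=> q /eqP Hq; exfalso; move: Hp; rewrite -Hq /=; lia.
Qed.

Lemma get_const (c : R) : get (const_mx c : 'rV[R]_1) 0 = c.
Proof. by rewrite /get big_mkcond big_ord1 /= mxE. Qed.

Lemma get1 (v : 'rV[R]_1) : get v 0 = v 0 0.
Proof. by rewrite /get big_mkcond big_ord1. Qed.

Lemma sum_ind (V : finType) (P : pred V) (j : V) :
  \sum_(l | P l) ((l == j)%:R : R) = (P j)%:R.
Proof.
case Pj: (P j).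
  rewrite (bigD1 j) //= eqxx big1 ?addr0 // => l /andP [_ /negbTE ->]; by [].
by rewrite big1 // => l Pl; case: eqP => // E; move: Pl; rewrite E Pj.
Qed.

Lemma oneBind (b : bool) : 1 - (b%:R : R) = (~~ b)%:R.
Proof. by case: b; rewrite ?subrr ?subr0. Qed.

Lemma indM (a b : bool) : (a%:R : R) * b%:R = (a && b)%:R.
Proof. by case: a; case: b; rewrite ?mul1r ?mul0r. Qed.

End Helpers.
Arguments mk {R} n f.
Arguments get {R n} v p.

Section GNN.
Variables (R : realType) (dx de : nat).

Definition Dd (t : nat) : nat := if t is 2 then 1%N else 4%N.
Definition mm (t : nat) : nat := 1%N.

Definition MM (t : nat) (a b : 'rV[R]_(layer_dim dx Dd t)) (_ : 'rV[R]_de) :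
  'rV[R]_(mm t) :=
  mk (mm t) (fun _ => match t with
                      | 0 => get b (dx + 1)
                      | 1 => get b 2
                      | _ => get b 3 - get a 2 * (1 - get b 0) * (1 - get b 1)
                      end).

Definition UU (t : nat) (a : 'rV[R]_(layer_dim dx Dd t)) (s : 'rV[R]_(mm t)) :
  'rV[R]_(layer_dim dx Dd t.+1) :=
  mk _ (fun q => match t with
        | 0 => nth 0 [:: get a dx; get a (dx + 1);
                         (1 - get a dx) * (1 - get a (dx + 1)) * get s 0] q
        | 1 => nth 0 [:: get a 0; get a 1; get a 2;
                         (1 - get a 0) * (1 - get a 1) * get s 0] q
        | _ => (1 - get a 0) * (1 - get a 1) * get s 0
        end).

Variables (V : finType) (adj : rel V) (x : V -> 'rV[R]_dx) (e : V -> V -> 'rV[R]_de).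
Hypothesis Hg : simple_graph adj.
Variables (i j : V).
Hypothesis Hij : adj i j.

Notation h := (i2gnn_h adj x e 3 MM UU).
Notation S := (khop adj 3 i).
Definition p3 (v : V) : bool := [&& adj v j, v != i & v != j].

Lemma khopS n a b : a \in khop adj n i -> adj a b -> b \in khop adj n.+1 i.
Proof.
move=> Ha Hab; rewrite /khop iterS -/(khop adj n i) !inE; apply/orP; right.
by apply/existsP; exists a; rewrite Ha.
Qed.

Lemma khopW n a : a \in khop adj n i -> a \in khop adj n.+1 i.
Proof. by move=> Ha; rewrite /khop iterS -/(khop adj n i) !inE Ha. Qed.

Lemma i_in : i \in khop adj 0 i.
Proof. by rewrite /khop /= inE. Qed.

Lemma j_in : j \in khop adj 1 i.
Proof. exact: khopS i_in Hij. Qed.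

Lemma p3_in v : p3 v -> v \in khop adj 2 i.
Proof.
case/and3P=> Hv _ _; apply: khopS j_in _.
by case: Hg => sym _; rewrite sym.
Qed.

Lemma h0_i k : get (h 0 i j k) dx = (k == i)%:R.
Proof.
rewrite /= get_row_mxr // subnn get_row_mxl // get_const //.
Qed.

Lemma h0_j k : get (h 0 i j k) (dx + 1) = (k == j)%:R.
Proof.
rewrite /= get_row_mxr ?leq_addr // addKn get_row_mxr // subnn get_const //.
Qed.

Lemma h1E k : [/\ get (h 1 i j k) 0 = (k == i)%:R, get (h 1 i j k) 1 = (k == j)%:R
   & get (h 1 i j k) 2 = (p3 k)%:R].
Proof.
have -> : h 1 i j k = UU 0 (h 0 i j k)
   (\sum_(l in S | adj k l) MM 0 (h 0 i j k) (h 0 i j l) (e k l)) by [].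
rewrite /UU !get_mk //= h0_i h0_j; split => //.
rewrite get_sum; under eq_bigr do rewrite /MM get_mk // h0_j.
rewrite sum_ind !oneBind !indM /p3.
have : j \in S by apply: khopW; apply: khopW; exact: j_in.
move=> ->; case: Hg => sym _; rewrite sym /=.
by rewrite andbC andbA.
Qed.
Lemma UU1E (a : 'rV[R]_(layer_dim dx Dd 1)) s :
  [/\ get (UU 1 a s) 0 = get a 0, get (UU 1 a s) 1 = get a 1,
      get (UU 1 a s) 2 = get a 2 &
      get (UU 1 a s) 3 = (1 - get a 0) * (1 - get a 1) * get s 0].
Proof. by rewrite /UU !get_mk. Qed.

Lemma UU2E (a : 'rV[R]_(layer_dim dx Dd 2)) s :
  get (UU 2 a s) 0 = (1 - get a 0) * (1 - get a 1) * get s 0.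
Proof. by rewrite /UU !get_mk. Qed.

Lemma h2E k : [/\ get (h 2 i j k) 0 = (k == i)%:R, get (h 2 i j k) 1 = (k == j)%:R,
   get (h 2 i j k) 2 = (p3 k)%:R
   & get (h 2 i j k) 3 = ((k != i) && (k != j))%:R * \sum_(v | adj k v) (p3 v)%:R].
Proof.
have H2 : forall l, get (h 1 i j l) 2 = (p3 l)%:R by move=> l; case: (h1E l).
have -> : h 2 i j k = UU 1 (h 1 i j k)
   (\sum_(l in S | adj k l) MM 1 (h 1 i j k) (h 1 i j l) (e k l)) by [].
case: (UU1E (h 1 i j k) (\sum_(l in S | adj k l) MM 1 (h 1 i j k) (h 1 i j l) (e k l))) => -> -> -> ->.
case: (h1E k) => -> -> ->; split => //.
rewrite get_sum; under eq_bigr do rewrite /MM get_mk // H2.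
rewrite !oneBind indM; congr (_ * _).
rewrite [RHS]big_mkcond [LHS]big_mkcond /=; apply: eq_bigr => v _.
case Hv: (adj k v) => /=; last by rewrite andbF.
rewrite andbT; case Hp: (p3 v) => /=; last by case: (v \in S).
by rewrite (khopW _ _ (p3_in _ Hp)).
Qed.
Lemma pointwise k l v : v != k ->
  ([&& k != i, k != j, adj k l, l != i, l != j, adj l v, adj v j, v != i & v != j])
  = [&& uniq [:: i; j; v; l; k], adj i j, adj j v, adj v l & adj l k].
Proof.
move=> vk; case: Hg => sym irr.
rewrite (sym j v) (sym v l) (sym l k) Hij.
case Akl: (adj k l); last by rewrite !andbF.
case Alv: (adj l v); last by rewrite !andbF.
case Avj: (adj v j); last by rewrite !andbF.
have ij : i != j by apply: contraTneq Hij => ->; rewrite irr.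
have vl : v != l by apply: contraTneq Alv => ->; rewrite irr.
have lk : l != k by apply: contraTneq Akl => ->; rewrite irr.
have jv : j != v by apply: contraTneq Avj => ->; rewrite irr.
rewrite /= !inE !andbT !negb_or ij vl lk jv vk (eq_sym i v) (eq_sym i l) (eq_sym i k)
  (eq_sym j l) (eq_sym j k) /=.
rewrite andbT (eq_sym v j) jv /= !andbT.
by case: (k != i); case: (k != j); case: (l != i); case: (l != j); case: (v != i).
Qed.
Lemma h3E k : get (h 3 i j k) 0 = ((k != i) && (k != j))%:R *
  \sum_(l | adj k l) (((l != i) && (l != j))%:R * \sum_(v | adj l v) (p3 v)%:R
                      - (p3 k)%:R * ((l != i) && (l != j))%:R).
Proof.
have -> : h 3 i j k = UU 2 (h 2 i j k)
   (\sum_(l in S | adj k l) MM 2 (h 2 i j k) (h 2 i j l) (e k l)) by [].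
case: (h2E k) => E0 E1 E2 _; rewrite UU2E E0 E1.
rewrite get_sum; under eq_bigr => l _ do rewrite /MM get_mk // E2.
rewrite !oneBind indM; congr (_ * _).
rewrite [RHS]big_mkcond [LHS]big_mkcond; apply: eq_bigr => l _.
case: (h2E l) => -> -> _ ->; rewrite !oneBind -mulrA indM.
case Hl: (adj k l); rewrite ?andbF ?andbT //.
case Sl: (l \in S); first by [].
case: Hg => sym _.
have Hk : p3 k = false.
  apply/negbTE/negP => /p3_in Hk; move: Sl.
  by rewrite (khopS _ _ _ Hk Hl).
rewrite Hk mul0r subr0 big1 ?mulr0 // => v Hv.
case Hp: (p3 v) => //; exfalso; move: Sl.
by rewrite (khopS _ _ _ (p3_in _ Hp)) // sym.
Qed.
Lemma final k :
  ((k != i) && (k != j))%:R * \sum_(l | adj k l)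
     (((l != i) && (l != j))%:R * \sum_(v | adj l v) (p3 v)%:R
      - (p3 k)%:R * ((l != i) && (l != j))%:R)
  = (count_4paths adj i j k)%:R :> R.
Proof.
case: Hg => sym irr.
pose Pb v l := uniq [:: i; j; v; l; k] && adj i j && adj j v && adj v l && adj l k.
rewrite /count_4paths -sum1_card natr_sum.
transitivity (\sum_v \sum_l ((Pb v l)%:R : R)); last first.
  rewrite pair_big /= [RHS]big_mkcond; apply: eq_bigr => -[v l] _ /=.
  by rewrite /Pb inE /=; case: ifP.
rewrite mulr_sumr big_mkcond [RHS]exchange_big /=; apply: eq_bigr => l _.
rewrite [RHS](bigD1 k) //= {1}/Pb /= !inE eqxx !orbT !andbF /= add0r.
have PbE : forall v, v != k -> Pb v l =
   [&& (k != i) && (k != j), adj k l, (l != i) && (l != j), adj l v & p3 v].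
  move=> v vk; have E := pointwise k l v vk.
  transitivity [&& uniq [:: i; j; v; l; k], adj i j, adj j v, adj v l & adj l k].
    rewrite /Pb; move: (uniq [:: i; j; v; l; k]) (adj i j) (adj j v) (adj v l) (adj l k).
    by move=> [] [] [] [] [].
  rewrite -E /p3; move: (k != i) (k != j) (adj k l) (l != i) (l != j) (adj l v) (adj v j) (v != i) (v != j).
  by move=> [] [] [] [] [] [] [] [] [].
rewrite [RHS](eq_bigr (fun v => ([&& (k != i) && (k != j), adj k l,
   (l != i) && (l != j), adj l v & p3 v])%:R)); last by move=> v vk; rewrite PbE.
case Hkl: (adj k l) => /=; last by rewrite big1 // => v _; rewrite andbF.
rewrite (bigD1 k) /=; last by rewrite sym.
rewrite (_ : forall (a p s : R), a * (p + s) - p * a = a * s); last first.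
  by move=> a p s; rewrite mulrDr [p * a]mulrC addrAC subrr add0r.
rewrite mulr_sumr mulr_sumr [RHS]big_mkcond [LHS]big_mkcond; apply: eq_bigr => v _.
case vk: (v != k); rewrite ?andbF ?andbT //=.
case: (adj l v) => /=; last by rewrite !andbF.
by rewrite !indM.
Qed.
End GNN.


Theorem lemma3 (R : realType) (dx de : nat) :
  exists (K T : nat) (D m : nat -> nat)
    (M : forall t, 'rV[R]_(layer_dim dx D t) -> 'rV[R]_(layer_dim dx D t) ->
                   'rV[R]_de -> 'rV[R]_(m t))
    (U : forall t, 'rV[R]_(layer_dim dx D t) -> 'rV[R]_(m t) ->
                   'rV[R]_(layer_dim dx D t.+1))
    (HT : layer_dim dx D T = 1%N),
  (1 <= K)%N /\
  forall (V : finType) (adj : rel V) (x : V -> 'rV[R]_dx)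
         (e : V -> V -> 'rV[R]_de),
    simple_graph adj ->
    (forall k l, e k l = e l k) ->
    forall i j k : V, adj i j -> k \in khop adj K i ->
      castmx (erefl 1%N, HT) (i2gnn_h adj x e K M U T i j k)
      = const_mx (count_4paths adj i j k)%:R.
Proof.
exists 3%N, 3%N, Dd, mm, (@MM R dx de), (@UU R dx), erefl; split => //.
move=> V adj x e Hg _ i j k Hij _.
rewrite castmx_id; apply/matrixP => a b; rewrite !ord1 [RHS]mxE.
rewrite -(@final R V adj Hg i j Hij k) -(@h3E R dx de V adj x e Hg i j Hij k).
by rewrite get1.
Qed.
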